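(* For every $n$, the $(\wedge,\to)$-homomorphism $h:F_{\wedge,\to}(n)\to\mathcal U(U(n)_{\wedge,\to})$ extending $p_i\mapsto\{x\in U(n)_{\wedge,\to}: x\models p_i\}$ is injective. In particular, $F_{\wedge,\to}(n)$ is finite, and therefore the variety of implicative meet-semilattices is locally finite.
   Context: An implicative meet-semilattice is $(A,\wedge,\to)$ with $(A,\wedge)$ a meet-semilattice and $a\wedge b\le c\iff a\le b\to c$. $F_{\wedge,\to}(n)$ is the free implicative meet-semilattice on $p_1,\dots,p_n$, equivalently the $(\wedge,\to)$-formulas in $p_1,\dots,p_n$ modulo IPC-equivalence. $\mathcal U(X)$ is the Heyting algebra of up-sets of a poset $X$. Models are posets with an order-preserving colouring $c:M\to\{0,1\}^n$ and intuitionistic Kripke semantics ($x\models p_i$ iff $c(x)_i=1$). A point $x$ is separated if for some variable $q$, $x\not\models q$ but all $y>x$ satisfy $q$; $M^s$ denotes the separated points with restricted order and colouring. $U(n)$ is the $n$-universal model: the generated submodel of the canonical model of IPC on $p_1,\dots,p_n$ (prime filters of the free Heyting algebra ordered by inclusion, $c(x)_i=1$ iff $p_i\in x$) consisting of points with finite up-set. For every model of finite depth there is a unique p-morphism (order- and colour-preserving map with the back condition) into $U(n)$; $U(n)^s$ has finite depth, and $U(n)_{\wedge,\to}$ denotes the image of the unique p-morphism $U(n)^s\to U(n)$, a generated submodel of $U(n)$. *)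

(* Defs.v *)
From Stdlib Require Import List Arith.
Import ListNotations.

(** * Intuitionistic propositional formulas; variable p_(i+1) is [Var i]. *)
Inductive form : Type :=
| Var (i : nat)
| Bot
| And (a b : form)
| Or (a b : form)
| Imp (a b : form).

Definition Top : form := Imp Bot Bot.

Fixpoint in_lang (n : nat) (a : form) : Prop :=
  match a with
  | Var i => i < n
  | Bot => True
  | And a b | Or a b | Imp a b => in_lang n a /\ in_lang n b
  end.

Inductive nd : list form -> form -> Prop :=
| nd_ax G a : In a G -> nd G a
| nd_botE G a : nd G Bot -> nd G a
| nd_andI G a b : nd G a -> nd G b -> nd G (And a b)
| nd_andE1 G a b : nd G (And a b) -> nd G a
| nd_andE2 G a b : nd G (And a b) -> nd G b
| nd_orI1 G a b : nd G a -> nd G (Or a b)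
| nd_orI2 G a b : nd G b -> nd G (Or a b)
| nd_orE G a b c : nd G (Or a b) -> nd (a :: G) c -> nd (b :: G) c -> nd G c
| nd_impI G a b : nd (a :: G) b -> nd G (Imp a b)
| nd_impE G a b : nd G (Imp a b) -> nd G a -> nd G b.

Definition ipc_equiv (a b : form) : Prop := nd [] (Imp a b) /\ nd [] (Imp b a).

Inductive imf : Type :=
| IVar (i : nat)
| IAnd (a b : imf)
| IImp (a b : imf).

Fixpoint emb (a : imf) : form :=
  match a with
  | IVar i => Var i
  | IAnd a b => And (emb a) (emb b)
  | IImp a b => Imp (emb a) (emb b)
  end.

Fixpoint imf_lang (n : nat) (a : imf) : Prop :=
  match a with
  | IVar i => i < n
  | IAnd a b | IImp a b => imf_lang n a /\ imf_lang n b
  end.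

(** A point is a prime filter of the free Heyting algebra on n generators
    (the Lindenbaum algebra of n-formulas), represented as the set of
    n-formulas whose classes belong to it. Points are ordered by inclusion;
    equality of points is extensional equality of sets. *)
Definition fset := form -> Prop.
Definition subset (x y : fset) : Prop := forall a, x a -> y a.

Definition prime_filter (n : nat) (x : fset) : Prop :=
  (forall a, x a -> in_lang n a) /\
  x Top /\
  (forall a b, x a -> in_lang n b -> nd [] (Imp a b) -> x b) /\
  (forall a b, x a -> x b -> x (And a b)) /\
  ~ x Bot /\
  (forall a b, x (Or a b) -> x a \/ x b).

Definition finite_upset (n : nat) (x : fset) : Prop :=
  exists l : list fset, forall y, prime_filter n y -> subset x y ->
    exists z, In z l /\ subset y z /\ subset z y.

(** points of the n-universal model U(n); colouring: x |= p_(i+1) iff Var i \in x *)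
Definition Upt (n : nat) (x : fset) : Prop := prime_filter n x /\ finite_upset n x.

Definition separated (n : nat) (x : fset) : Prop :=
  Upt n x /\
  exists i, i < n /\ ~ x (Var i) /\
    forall y, Upt n y -> subset x y -> ~ subset y x -> y (Var i).

Definition pmorph (n : nat) (f : fset -> fset) : Prop :=
  (forall x, separated n x -> Upt n (f x)) /\
  (forall x y, separated n x -> separated n y -> subset x y -> subset (f x) (f y)) /\
  (forall x i, separated n x -> i < n -> (f x (Var i) <-> x (Var i))) /\
  (forall x z, separated n x -> Upt n z -> subset (f x) z ->
     exists y, separated n y /\ subset x y /\ subset (f y) z /\ subset z (f y)).

(** U(n)_{/\,->}: the image of the (unique) p-morphism U(n)^s -> U(n) *)
Definition Uim (n : nat) (z : fset) : Prop :=
  Upt n z /\ exists f, pmorph n f /\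
    exists y, separated n y /\ subset (f y) z /\ subset z (f y).

Fixpoint hsem (n : nat) (a : imf) (x : fset) : Prop :=
  match a with
  | IVar i => x (Var i)
  | IAnd a b => hsem n a x /\ hsem n b x
  | IImp a b => forall y, Uim n y -> subset x y -> hsem n a y -> hsem n b y
  end.

Definition h (n : nat) (a : imf) : fset -> Prop := fun x => Uim n x /\ hsem n a x.

Record ImpSL : Type := {
  car : Type;
  meet : car -> car -> car;
  imp : car -> car -> car;
  meetA : forall a b c, meet a (meet b c) = meet (meet a b) c;
  meetC : forall a b, meet a b = meet b a;
  meetI : forall a, meet a a = a;
  (* a /\ b <= c  iff  a <= b -> c, where x <= y :<-> meet x y = x *)
  resid : forall a b c, meet (meet a b) c = meet a b <-> meet a (imp b c) = a
}.

Fixpoint eval (A : ImpSL) (g : nat -> car A) (a : imf) : car A :=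
  match a with
  | IVar i => g i
  | IAnd a b => meet A (eval A g a) (eval A g b)
  | IImp a b => imp A (eval A g a) (eval A g b)
  end.

(* Main.v *)
Require Import Defs.
From Stdlib Require Import List Arith Lia Classical ClassicalEpsilon.
Import ListNotations.

Lemma nd_weak : forall G a, nd G a -> forall G', (forall x, In x G -> In x G') -> nd G' a.
Proof.
  induction 1; intros G' HG.
  - apply nd_ax; auto.
  - apply nd_botE; auto.
  - apply nd_andI; auto.
  - eapply nd_andE1; eauto.
  - eapply nd_andE2; eauto.
  - apply nd_orI1; auto.
  - apply nd_orI2; auto.
  - eapply nd_orE; [eauto| apply IHnd2 | apply IHnd3]; intros x [->|Hx]; simpl; auto.
  - apply nd_impI; apply IHnd; intros x [->|Hx]; simpl; auto.
  - eapply nd_impE; eauto.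
Qed.

Lemma nd_subst : forall H b, nd H b -> forall G, (forall h, In h H -> nd G h) -> nd G b.
Proof.
  induction 1; intros G' HG.
  - auto.
  - apply nd_botE; auto.
  - apply nd_andI; auto.
  - eapply nd_andE1; eauto.
  - eapply nd_andE2; eauto.
  - apply nd_orI1; auto.
  - apply nd_orI2; auto.
  - eapply nd_orE; [eauto| apply IHnd2 | apply IHnd3]; intros x [->|Hx].
    1,3: apply nd_ax; simpl; auto.
    all: eapply nd_weak; [apply HG; auto| simpl; auto].
  - apply nd_impI; apply IHnd; intros x [->|Hx]; [apply nd_ax; simpl; auto|].
    eapply nd_weak; [apply HG; auto| simpl; auto].
  - eapply nd_impE; eauto.
Qed.

Lemma nd_mp : forall G a b, nd G (Imp a b) -> nd G a -> nd G b.
Proof. intros; eapply nd_impE; eauto. Qed.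

Lemma nd_top : forall G, nd G Top.
Proof. intros; apply nd_impI, nd_ax; simpl; auto. Qed.

(** * Generic Kripke semantics *)
Section Frame.
Variable W : Type.
Variable P : W -> Prop.
Variable R : W -> W -> Prop.
Variable V : W -> nat -> Prop.
Hypothesis Rrefl : forall w, R w w.
Hypothesis Rtrans : forall u v w, R u v -> R v w -> R u w.
Hypothesis Vmono : forall u v i, R u v -> V u i -> V v i.

Fixpoint sat (w : W) (a : form) : Prop :=
  match a with
  | Var i => V w i
  | Bot => False
  | And a b => sat w a /\ sat w b
  | Or a b => sat w a \/ sat w b
  | Imp a b => forall w', P w' -> R w w' -> sat w' a -> sat w' b
  end.

Lemma persist : forall a u v, R u v -> sat u a -> sat v a.
Proof.
  induction a; simpl; intros u v Ruv H; try tauto.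
  - eauto.
  - destruct H; split; eauto.
  - destruct H; [left|right]; eauto.
  - intros w' Pw Rw; apply H; eauto.
Qed.

Lemma sound : forall G a, nd G a -> forall w, P w -> (forall g, In g G -> sat w g) -> sat w a.
Proof.
  induction 1; intros w Pw HG; simpl in *.
  - auto.
  - destruct (IHnd w Pw HG).
  - split; auto.
  - apply (IHnd w Pw HG).
  - apply (IHnd w Pw HG).
  - left; auto.
  - right; auto.
  - destruct (IHnd1 w Pw HG) as [Ha|Hb].
    + apply IHnd2; auto; intros g [<-|Hg]; auto.
    + apply IHnd3; auto; intros g [<-|Hg]; auto.
  - intros w' Pw' Rw Ha; apply IHnd; auto; intros g [<-|Hg]; auto.
    eapply persist; eauto.
  - eapply (IHnd1 w Pw HG); eauto.
Qed.

Lemma sound0 : forall a b, nd [] (Imp a b) -> forall w, P w -> sat w a -> sat w b.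
Proof.
  intros a b H w Pw Ha. refine (sound _ _ H w Pw _ w Pw (Rrefl w) Ha). intros g [].
Qed.

End Frame.

Fixpoint fconj (l : list form) : form := match l with [] => Top | a :: l => And a (fconj l) end.
Fixpoint fdisj (l : list form) : form := match l with [] => Bot | a :: l => Or a (fdisj l) end.

Lemma lang_conj n l : (forall a, In a l -> in_lang n a) -> in_lang n (fconj l).
Proof. induction l; simpl; intros; auto. Qed.
Lemma lang_disj n l : (forall a, In a l -> in_lang n a) -> in_lang n (fdisj l).
Proof. induction l; simpl; intros; auto. Qed.

Section PF.
Variable n : nat.
Variable v : fset.
Hypothesis Hv : prime_filter n v.

Lemma pf_lang a : v a -> in_lang n a.
Proof. destruct Hv as [H _]; auto. Qed.
Lemma pf_closed a b : v a -> in_lang n b -> nd [] (Imp a b) -> v b.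
Proof. destruct Hv as [_ [_ [H _]]]; eauto. Qed.
Lemma pf_top : v Top.
Proof. destruct Hv as [_ [H _]]; auto. Qed.
Lemma pf_andI a b : v a -> v b -> v (And a b).
Proof. destruct Hv as [_ [_ [_ [H _]]]]; auto. Qed.
Lemma pf_nobot : ~ v Bot.
Proof. destruct Hv as [_ [_ [_ [_ [H _]]]]]; auto. Qed.
Lemma pf_or a b : v (Or a b) -> v a \/ v b.
Proof. destruct Hv as [_ [_ [_ [_ [_ H]]]]]; auto. Qed.
Lemma pf_and1 a b : v (And a b) -> v a.
Proof. intro H. pose proof (pf_lang _ H) as [La Lb]. eapply pf_closed; eauto.
  apply nd_impI. eapply nd_andE1, nd_ax; simpl; eauto. Qed.
Lemma pf_and2 a b : v (And a b) -> v b.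
Proof. intro H. pose proof (pf_lang _ H) as [La Lb]. eapply pf_closed; eauto.
  apply nd_impI. eapply nd_andE2, nd_ax; simpl; eauto. Qed.
Lemma pf_mp a b : v (Imp a b) -> v a -> v b.
Proof. intros H1 H2. pose proof (pf_lang _ H1) as [La Lb].
  eapply pf_closed; [apply (pf_andI _ _ H1 H2)| auto|].
  apply nd_impI. eapply nd_impE; [eapply nd_andE1| eapply nd_andE2]; apply nd_ax; simpl; eauto. Qed.
Lemma pf_conj l : (forall a, In a l -> v a) -> v (fconj l).
Proof. induction l; simpl; intros. apply pf_top. apply pf_andI; auto. Qed.
Lemma pf_disj l : v (fdisj l) -> exists b, In b l /\ v b.
Proof. induction l; simpl; intros H. destruct (pf_nobot H).
  destruct (pf_or _ _ H) as [H1|H1]; [eauto|]. destruct (IHl H1) as [b [? ?]]; eauto. Qed.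
Lemma pf_weakimp a b : v b -> in_lang n a -> v (Imp a b).
Proof. intros Hb La. eapply pf_closed; eauto. simpl; split; auto; eapply pf_lang; eauto.
  apply nd_impI, nd_impI, nd_ax; simpl; auto. Qed.
End PF.

Section Th.
Variable W : Type.
Variable P : W -> Prop.
Variable R : W -> W -> Prop.
Variable V : W -> nat -> Prop.
Hypothesis Rrefl : forall w, R w w.
Hypothesis Rtrans : forall u v w, R u v -> R v w -> R u w.
Hypothesis Vmono : forall u v i, R u v -> V u i -> V v i.
Variable n : nat.

Notation sat := (sat W P R V).

Definition Th (w : W) : fset := fun a => in_lang n a /\ sat w a.

Lemma sat_conj w l : sat w (fconj l) <-> forall a, In a l -> sat w a.
Proof. induction l; simpl. split; [intros _ a []| intros _ w' _ _ H; exact H].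
  rewrite IHl. split. intros [H1 H2] b [<-|Hb]; auto. intros H; split; auto. Qed.
Lemma sat_disj w l : sat w (fdisj l) <-> exists a, In a l /\ sat w a.
Proof. induction l; simpl. split; [tauto| intros [a [[] _]]].
  rewrite IHl. split. intros [H|[b [? ?]]]; eauto. intros [b [[<-|Hb] Hs]]; eauto. Qed.

Lemma Th_pf w : P w -> prime_filter n (Th w).
Proof.
  intros Pw. unfold Th. split; [|split; [|split; [|split; [|split]]]].
  - tauto.
  - split; [simpl; auto| intros w' _ _ []].
  - intros a b [La Sa] Lb Hab. split; auto. eapply sound0; eauto.
  - intros a b [La Sa] [Lb Sb]; split; simpl; auto.
  - intros [_ []].
  - intros a b [[La Lb] [Sa|Sb]]; auto.
Qed.

Lemma Th_mono u w : R u w -> subset (Th u) (Th w).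
Proof. intros H a [La Sa]; split; auto. eapply persist; eauto. Qed.

Definition covers (x : W) (l : list W) : Prop :=
  forall y, P y -> R x y -> exists z, In z l /\ P z /\ R x z /\ R y z /\ R z y.

Lemma Th_back x l : P x -> covers x l -> forall v, prime_filter n v -> subset (Th x) v ->
  exists y, In y l /\ P y /\ R x y /\ subset (Th y) v /\ subset v (Th y).
Proof.
  intros Px Hc v Hv Hxv.
  destruct (classic (exists y, In y l /\ P y /\ R x y /\ subset (Th y) v /\ subset v (Th y))) as [H|H]; auto.
  exfalso.
  assert (Hl : exists As Bs, (forall a, In a As -> v a) /\ (forall b, In b Bs -> in_lang n b /\ ~ v b) /\
      forall z, In z l -> P z -> R x z -> (exists a, In a As /\ ~ sat z a) \/ (exists b, In b Bs /\ sat z b)).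
  { clear Hc. induction l as [|z l IH].
    - exists [], []; split; [|split]; simpl; try tauto.
    - destruct IH as [As [Bs [H1 [H2 H3]]]].
      { intros [y [Hy Hy']]; apply H; exists y; simpl; auto. }
      destruct (classic (P z /\ R x z)) as [[Pz Rz]|Hz].
      + assert (Hn : ~ (subset (Th z) v /\ subset v (Th z))) by (intro; apply H; exists z; simpl; auto).
        destruct (classic (subset v (Th z))) as [Hs|Hs].
        * assert (exists b, Th z b /\ ~ v b) as [b [[Lb Sb] Nb]].
          { apply NNPP; intro Hc; apply Hn; split; auto. intros b Hb; apply NNPP; intro; apply Hc; eauto. }
          exists As, (b :: Bs); split; [|split].
          -- auto.
          -- intros c [<-|Hc]; [auto|apply H2; auto].
          -- intros z' [<-|Hz'] Pz' Rz'. right; exists b; simpl; auto.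
             destruct (H3 z' Hz' Pz' Rz') as [[a [? ?]]|[b' [? ?]]]; [left|right]; eauto; exists b'; simpl; auto.
        * assert (exists a, v a /\ ~ Th z a) as [a [Va Na]].
          { apply NNPP; intro Hc; apply Hs. intros b Hb; apply NNPP; intro; apply Hc; eauto. }
          exists (a :: As), Bs; split; [|split].
          -- intros c [<-|Hc]; auto.
          -- apply H2.
          -- intros z' [<-|Hz'] Pz' Rz'.
             ++ left; exists a; simpl; split; auto. intro Sa; apply Na; split; auto. eapply pf_lang; eauto.
             ++ destruct (H3 z' Hz' Pz' Rz') as [[a' [? ?]]|[b' [? ?]]]; [left|right]; eauto; exists a'; simpl; auto.
      + exists As, Bs; split; [|split]; auto.
        intros z' [<-|Hz'] Pz' Rz'; [exfalso; auto| auto]. }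
  destruct Hl as [As [Bs [H1 [H2 H3]]]].
  assert (LA : in_lang n (fconj As)) by (apply lang_conj; intros; eapply pf_lang; eauto).
  assert (LB : in_lang n (fdisj Bs)) by (apply lang_disj; intros; apply H2; auto).
  assert (Hi : Th x (Imp (fconj As) (fdisj Bs))).
  { split; [simpl; auto|]. intros y Py Rxy Sy.
    destruct (Hc y Py Rxy) as [z [Hz [Pz [Rxz [Ryz Rzy]]]]].
    apply (persist _ _ _ _ Rtrans Vmono _ z); auto.
    destruct (H3 z Hz Pz Rxz) as [[a [Ha Na]]|[b [Hb Sb]]].
    - exfalso; apply Na. apply (proj1 (sat_conj z As)); auto. eapply persist; eauto.
    - apply sat_disj; eauto. }
  apply Hxv in Hi.
  pose proof (pf_mp _ _ Hv _ _ Hi (pf_conj _ _ Hv _ H1)) as Hd.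
  destruct (pf_disj _ _ Hv _ Hd) as [b [Hb Vb]]. apply (H2 b); auto.
Qed.

Lemma Th_finite x l : P x -> covers x l -> finite_upset n (Th x).
Proof.
  intros Px Hc. exists (map Th l). intros y Hy Hxy.
  destruct (Th_back x l Px Hc y Hy Hxy) as [z [Hz [Pz [_ [H1 H2]]]]].
  exists (Th z); split; auto. apply in_map; auto.
Qed.

End Th.

Fixpoint code (a : form) : list bool :=
  match a with
  | Var i => false :: false :: (repeat true i ++ [false])
  | Bot => [false; true]
  | And a b => true :: false :: false :: (code a ++ code b)
  | Or a b => true :: false :: true :: (code a ++ code b)
  | Imp a b => true :: true :: (code a ++ code b)
  end.

Lemma rep_inj : forall i j l1 l2, repeat true i ++ false :: l1 = repeat true j ++ false :: l2 -> i = j /\ l1 = l2.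
Proof.
  induction i; destruct j; simpl; intros l1 l2 H; inversion H; auto.
  destruct (IHi j l1 l2 H1); auto.
Qed.

Lemma code_inj : forall a b l1 l2, code a ++ l1 = code b ++ l2 -> a = b /\ l1 = l2.
Proof.
  induction a; destruct b; simpl; intros l1 l2 H; inversion H; auto.
  - rewrite <- !app_assoc in H1. simpl in H1. destruct (rep_inj _ _ _ _ H1); subst; auto.
  - rewrite <- !app_assoc in H1. destruct (IHa1 _ _ _ H1) as [-> H2].
    destruct (IHa2 _ _ _ H2) as [-> ->]; auto.
  - rewrite <- !app_assoc in H1. destruct (IHa1 _ _ _ H1) as [-> H2].
    destruct (IHa2 _ _ _ H2) as [-> ->]; auto.
  - rewrite <- !app_assoc in H1. destruct (IHa1 _ _ _ H1) as [-> H2].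
    destruct (IHa2 _ _ _ H2) as [-> ->]; auto.
Qed.

Fixpoint bnat (l : list bool) : nat :=
  match l with [] => 0 | b :: l => 2 * bnat l + (if b then 2 else 1) end.

Lemma bnat_inj : forall l1 l2, bnat l1 = bnat l2 -> l1 = l2.
Proof.
  induction l1 as [|b l1 IH]; destruct l2 as [|b' l2]; simpl; intros H; auto.
  - destruct b'; lia.
  - destruct b; lia.
  - destruct b, b'; try lia; f_equal; apply IH; lia.
Qed.

Definition enc (a : form) : nat := bnat (code a).
Lemma enc_inj a b : enc a = enc b -> a = b.
Proof. unfold enc; intro H. apply bnat_inj in H. rewrite <- (app_nil_r (code a)), <- (app_nil_r (code b)) in H.
  apply code_inj in H; tauto. Qed.

Definition pick (k : nat) : option form :=
  match excluded_middle_informative (exists a, enc a = k) with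
  | left H => Some (proj1_sig (constructive_indefinite_description _ H))
  | right _ => None
  end.

Lemma pick_enc a : pick (enc a) = Some a.
Proof.
  unfold pick. destruct excluded_middle_informative as [H|H]; [|exfalso; eauto].
  destruct constructive_indefinite_description as [b Hb]; simpl. f_equal; apply enc_inj; auto.
Qed.

Definition Der (G : fset) (a : form) : Prop := exists l, (forall g, In g l -> G g) /\ nd l a.
Definition add (G : fset) (a : form) : fset := fun x => x = a \/ G x.

Lemma Der_lift G As c : (forall a, In a As -> Der G a) -> nd As c -> Der G c.
Proof.
  intros H Hn. assert (exists l, (forall g, In g l -> G g) /\ forall a, In a As -> nd l a) as [l [Hl Hl']].
  { clear Hn. induction As as [|a As IH].
    - exists []; simpl; split; intros ? [].
    - destruct IH as [l [H1 H2]]; [intros; apply H; simpl; auto|].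
      destruct (H a (or_introl eq_refl)) as [l' [H3 H4]].
      exists (l ++ l'); split.
      + intros g Hg; apply in_app_or in Hg; destruct Hg; auto.
      + intros b [<-|Hb]; eapply nd_weak; eauto; intros; apply in_or_app; auto. }
  exists l; split; auto. eapply nd_subst; eauto.
Qed.

Lemma Der_ax G a : G a -> Der G a.
Proof. intro; exists [a]; split. intros g [<-|[]]; auto. apply nd_ax; simpl; auto. Qed.

Lemma Der_mono G H a : (forall x, G x -> H x) -> Der G a -> Der H a.
Proof. intros HGH [l [Hl Hn]]; exists l; auto. Qed.

Lemma Der_add G a b : Der (add G a) b <-> Der G (Imp a b).
Proof.
  split.
  - intros [l [Hl Hn]].
    assert (exists l', (forall g, In g l' -> G g) /\ forall g, In g l -> In g (a :: l')) as [l' [H1 H2]].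
    { clear Hn. induction l as [|x l IH].
      - exists []; simpl; split; intros ? [].
      - destruct IH as [l' [H1 H2]]; [intros; apply Hl; simpl; auto|].
        destruct (Hl x (or_introl eq_refl)) as [->|Hx].
        + exists l'; split; auto. intros g [<-|Hg]; simpl; auto. apply H2; auto.
        + exists (x :: l'); split. intros g [<-|Hg]; auto.
          intros g [<-|Hg]; simpl; auto. destruct (H2 g Hg); simpl; auto. }
    exists l'; split; auto. apply nd_impI. eapply nd_weak; eauto.
  - intros [l [Hl Hn]]. exists (a :: l); split.
    + intros g [<-|Hg]; [left|right]; auto.
    + eapply nd_impE; [eapply nd_weak; eauto; simpl; auto| apply nd_ax; simpl; auto].
Qed.

Lemma conj_proj : forall G g, In g G -> forall H, nd H (fconj G) -> nd H g.
Proof.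
  induction G; simpl; intros g Hg H Hn; [destruct Hg|].
  destruct Hg as [<-|Hg]. eapply nd_andE1; eauto. eapply IHG; eauto. eapply nd_andE2; eauto.
Qed.

Lemma nd_conj G a : nd G a -> nd [] (Imp (fconj G) a).
Proof.
  intro H. apply nd_impI. eapply nd_subst; eauto. intros h Hh. eapply conj_proj; eauto. apply nd_ax; simpl; auto.
Qed.

Section Lind.
Variable G0 : fset.
Variable d : form.
Hypothesis HG0 : ~ Der G0 d.

Fixpoint ch (k : nat) : fset :=
  match k with
  | 0 => G0
  | S k => match pick k with
           | Some a => if excluded_middle_informative (Der (add (ch k) a) d) then ch k else add (ch k) a
           | None => ch k
           end
  end.

Lemma ch_step k x : ch k x -> ch (S k) x.
Proof. intro H; simpl. destruct (pick k); auto. destruct excluded_middle_informative; auto. right; auto. Qed.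

Lemma ch_mono k m : k <= m -> forall x, ch k x -> ch m x.
Proof. induction 1; auto. intros x H0; apply ch_step; auto. Qed.

Lemma ch_nd k : ~ Der (ch k) d.
Proof.
  induction k; simpl; auto. destruct (pick k); auto. destruct excluded_middle_informative; auto.
Qed.

Definition U : fset := fun x => exists k, ch k x.

Lemma Der_U a : Der U a -> exists k, Der (ch k) a.
Proof.
  intros [l [Hl Hn]].
  assert (exists k, forall g, In g l -> ch k g) as [k Hk].
  { clear Hn. induction l as [|x l IH].
    - exists 0; intros ? [].
    - destruct IH as [k Hk]; [intros; apply Hl; simpl; auto|].
      destruct (Hl x (or_introl eq_refl)) as [k' Hk'].
      exists (k + k'). intros g [<-|Hg]; [apply (ch_mono k') | apply (ch_mono k)]; auto; lia. }
  exists k, l; auto.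
Qed.

Lemma U_nd : ~ Der U d.
Proof. intro H. destruct (Der_U _ H) as [k Hk]. apply (ch_nd k Hk). Qed.

Lemma U_sub k x : ch k x -> U x.
Proof. exists k; auto. Qed.

Lemma U_closed a : Der U a -> U a.
Proof.
  intro Ha. apply NNPP; intro Na.
  assert (Hk : ch (S (enc a)) = if excluded_middle_informative (Der (add (ch (enc a)) a) d) then ch (enc a) else add (ch (enc a)) a).
  { simpl. rewrite pick_enc; auto. }
  destruct excluded_middle_informative as [H|H].
  - apply U_nd. apply Der_add in H. apply (Der_mono _ U) in H; [|intros; eapply U_sub; eauto].
    apply (Der_lift U [Imp a d; a]); [intros x [<-|[<-|[]]]; auto|].
    eapply nd_impE; apply nd_ax; simpl; auto.
  - apply Na. exists (S (enc a)). rewrite Hk. left; auto.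
Qed.

Lemma U_notin a : ~ U a -> Der U (Imp a d).
Proof.
  intros Na.
  assert (Hk : ch (S (enc a)) = if excluded_middle_informative (Der (add (ch (enc a)) a) d) then ch (enc a) else add (ch (enc a)) a).
  { simpl. rewrite pick_enc; auto. }
  destruct excluded_middle_informative as [H|H].
  - apply Der_add in H. eapply Der_mono; [|eauto]. intros; eapply U_sub; eauto.
  - exfalso; apply Na. exists (S (enc a)). rewrite Hk. left; auto.
Qed.

Lemma U_prime a b : U (Or a b) -> U a \/ U b.
Proof.
  intro H. apply NNPP; intro Hn. apply U_nd.
  apply (Der_lift U [Or a b; Imp a d; Imp b d]).
  - intros x [<-|[<-|[<-|[]]]]. apply Der_ax; auto. apply U_notin; tauto. apply U_notin; tauto.
  - eapply nd_orE; [apply nd_ax; simpl; auto| apply (nd_impE _ a) | apply (nd_impE _ b)]; apply nd_ax; simpl; auto.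
Qed.

Lemma G0_U x : G0 x -> U x.
Proof. intro; exists 0; auto. Qed.

End Lind.

Lemma lindenbaum n w c d : prime_filter n w -> in_lang n c -> in_lang n d -> ~ w (Imp c d) ->
  exists v, prime_filter n v /\ subset w v /\ v c /\ ~ v d.
Proof.
  intros Hw Lc Ld Nw.
  assert (H0 : ~ Der (add w c) d).
  { intro H. apply Der_add in H. destruct H as [l [Hl Hn]]. apply Nw.
    apply (pf_closed n w Hw (fconj l)); [apply (pf_conj n); auto| simpl; auto| apply nd_conj; auto]. }
  set (UU := U (add w c) d).
  exists (fun x => in_lang n x /\ UU x).
  assert (Hcl : forall a, Der UU a -> UU a) by (apply U_closed; auto).
  assert (Hnd : ~ Der UU d) by (apply U_nd; auto).
  split; [|split; [|split]].
  - split; [|split; [|split; [|split; [|split]]]].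
    + tauto.
    + split; [simpl; auto|]. apply Hcl. exists []; split; [intros ? []| apply nd_top].
    + intros a b [La Ua] Lb Hab. split; auto. apply Hcl. apply (Der_lift _ [a]).
      intros x [<-|[]]; apply Der_ax; auto. eapply nd_impE; [eapply nd_weak; eauto; intros ? []| apply nd_ax; simpl; auto].
    + intros a b [La Ua] [Lb Ub]. split; [simpl; auto|]. apply Hcl. apply (Der_lift _ [a; b]).
      intros x [<-|[<-|[]]]; apply Der_ax; auto. apply nd_andI; apply nd_ax; simpl; auto.
    + intros [_ Ub]. apply Hnd. apply (Der_lift _ [Bot]). intros x [<-|[]]; apply Der_ax; auto.
      apply nd_botE, nd_ax; simpl; auto.
    + intros a b [[La Lb] Uo]. destruct (U_prime _ _ H0 _ _ Uo); [left|right]; auto.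
  - intros a Ha. split; [eapply pf_lang; eauto| apply G0_U; right; auto].
  - split; auto. apply G0_U; left; auto.
  - intros [_ Ud]. apply Hnd, Der_ax; auto.
Qed.

Lemma subset_refl x : subset x x.
Proof. intros a H; auto. Qed.
Lemma subset_trans x y z : subset x y -> subset y z -> subset x z.
Proof. intros H1 H2 a H; auto. Qed.

Lemma lang_emb n a : imf_lang n a -> in_lang n (emb a).
Proof. induction a; simpl; tauto. Qed.

Lemma pf_ext n y z : prime_filter n y -> subset y z -> subset z y -> prime_filter n z.
Proof.
  intros [H1 [H2 [H3 [H4 [H5 H6]]]]] Hyz Hzy. split; [|split; [|split; [|split; [|split]]]].
  - auto.
  - auto.
  - intros a b Ha Hb Hab; eauto.
  - auto.
  - auto.
  - intros a b Ha; destruct (H6 a b); auto.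
Qed.

Lemma Upt_ext n y z : Upt n y -> subset y z -> subset z y -> Upt n z.
Proof.
  intros [Hp [l Hl]] Hyz Hzy. split; [eapply pf_ext; eauto|]. exists l. intros w Hw Hzw.
  apply Hl; auto. eapply subset_trans; eauto.
Qed.

Lemma sep_ext n y z : separated n y -> subset y z -> subset z y -> separated n z.
Proof.
  intros [Hu [i [Hi [Hn Hs]]]] Hyz Hzy. split; [eapply Upt_ext; eauto|].
  exists i; split; [|split]; auto.
  intros w Hw Hzw Hwz. apply Hs; auto. eapply subset_trans; eauto. intro; apply Hwz; eapply subset_trans; eauto.
Qed.

Definition VU (x : fset) (i : nat) : Prop := x (Var i).
Definition fU (n : nat) : fset -> fset := Th fset (separated n) subset VU n.

Lemma VU_mono u v i : subset u v -> VU u i -> VU v i.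
Proof. unfold VU; auto. Qed.

Lemma sep_covers n x : separated n x -> exists l, covers fset (separated n) subset x l.
Proof.
  intros [[Hp [l Hl]] _]. exists l. intros y Hy Hxy.
  destruct (Hl y (proj1 (proj1 Hy)) Hxy) as [z [Hz [Hyz Hzy]]].
  exists z; split; [|split; [|split; [|split]]]; auto. eapply sep_ext; eauto. eapply subset_trans; eauto.
Qed.

Lemma fU_pmorph n : pmorph n (fU n).
Proof.
  split; [|split; [|split]].
  - intros x Hx. destruct (sep_covers n x Hx) as [l Hl]. split.
    + apply Th_pf; auto. apply subset_refl. apply subset_trans. apply VU_mono.
    + eapply Th_finite; eauto. apply subset_trans. apply VU_mono.
  - intros x y _ _ Hxy. apply Th_mono; auto. apply subset_trans. apply VU_mono.
  - intros x i Hx Hi. unfold fU, Th. simpl. unfold VU. tauto.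
  - intros x z Hx Hz Hxz. destruct (sep_covers n x Hx) as [l Hl].
    destruct (Th_back _ _ _ _ subset_trans VU_mono n x l Hx Hl z (proj1 Hz) Hxz)
      as [y [_ [Py [Rxy [H1 H2]]]]].
    exists y; auto.
Qed.

Lemma Uim_up n w w' : Uim n w -> Upt n w' -> subset w w' -> Uim n w'.
Proof.
  intros [Hw [f [Hf [y [Hy [H1 H2]]]]]] Hw' Hww'. split; auto. exists f; split; auto.
  destruct Hf as [_ [_ [_ Hb]]].
  destruct (Hb y w' Hy Hw') as [y' [Hy' [_ [H3 H4]]]]. eapply subset_trans; eauto.
  exists y'; auto.
Qed.

Lemma hsem_persist n a x y : subset x y -> hsem n a x -> hsem n a y.
Proof.
  revert x y; induction a; simpl; intros x y Hxy H.
  - apply Hxy; auto.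
  - destruct H; split; eauto.
  - intros z Hz Hyz. apply H; auto. eapply subset_trans; eauto.
Qed.

Lemma truth_Uim n c : imf_lang n c -> forall w, Uim n w -> (hsem n c w <-> w (emb c)).
Proof.
  induction c; simpl; intros Lc w Hw.
  - tauto.
  - destruct Lc as [L1 L2]. pose proof (proj1 (proj1 Hw)) as Hp.
    rewrite (IHc1 L1 w Hw), (IHc2 L2 w Hw). split.
    + intros [? ?]; apply (pf_andI n); auto.
    + intros H; split; [eapply (pf_and1 n)| eapply (pf_and2 n)]; eauto.
  - destruct Lc as [L1 L2]. pose proof (proj1 (proj1 Hw)) as Hp. split.
    + intros H. apply NNPP; intro Hn.
      destruct (lindenbaum n w (emb c1) (emb c2) Hp (lang_emb _ _ L1) (lang_emb _ _ L2) Hn)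
        as [v [Hv [Hwv [Hv1 Hv2]]]].
      assert (Uv : Uim n v).
      { apply (Uim_up n w); auto. split; auto. destruct Hw as [[_ [l Hl]] _]. exists l.
        intros y Hy Hvy. apply Hl; auto. eapply subset_trans; eauto. }
      apply Hv2. apply (IHc2 L2 v Uv). apply H; auto. apply (IHc1 L1 v Uv); auto.
    + intros H y Hy Hwy H1. apply (IHc2 L2 y Hy). apply (IHc1 L1 y Hy) in H1.
      eapply (pf_mp n); eauto. apply (proj1 (proj1 Hy)).
Qed.

Section Gen.
Variable W : Type.
Variable P : W -> Prop.
Variable R : W -> W -> Prop.
Variable V : W -> nat -> Prop.
Hypothesis Rrefl : forall w, R w w.
Hypothesis Rtrans : forall u v w, R u v -> R v w -> R u w.
Hypothesis Vmono : forall u v i, R u v -> V u i -> V v i.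
Variable n : nat.
Notation sat := (sat W P R V).

Definition strict x y := P y /\ R x y /\ ~ R y x.
Definition gsep (x : W) : Prop := exists q, q < n /\ ~ V x q /\ forall y, strict x y -> V y q.

Lemma sep_witness d x : imf_lang n d -> P x -> ~ sat x (emb d) ->
  (forall y, strict x y -> sat y (emb d)) -> gsep x.
Proof.
  revert x; induction d; simpl; intros x Ld Px Nx Hy.
  - exists i; auto.
  - destruct Ld as [L1 L2]. destruct (classic (sat x (emb d1))) as [H1|H1].
    + apply (IHd2 x L2 Px); [tauto|]. intros y Sy; apply Hy; auto.
    + apply (IHd1 x L1 Px H1). intros y Sy; apply Hy; auto.
  - destruct Ld as [L1 L2]. apply NNPP; intro Ns. apply Nx. intros z Pz Rxz Sz.
    destruct (classic (R z x)) as [Rzx|Rzx].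
    + assert (Sx : sat x (emb d1)) by (eapply persist; eauto).
      apply (persist _ _ _ _ Rtrans Vmono _ x); auto.
      apply NNPP; intro Nd. apply Ns. apply (IHd2 x L2 Px Nd).
      intros y [Py [Rxy Nyx]]. apply (Hy y); [split; auto| auto |apply Rrefl| ].
      eapply persist; eauto.
    + apply (Hy z); auto; split; auto.
Qed.

Lemma nonsep_det e z : imf_lang n e -> P z -> ~ gsep z ->
  (forall y, strict z y -> sat y (emb e)) -> sat z (emb e).
Proof.
  revert z; induction e; simpl; intros z Le Pz Ns Hy.
  - apply NNPP; intro Nv. apply Ns. exists i; split; [|split]; auto.
  - destruct Le as [L1 L2]; split; [apply IHe1|apply IHe2]; auto; intros y Sy; apply Hy; auto.
  - destruct Le as [L1 L2]. intros w Pw Rzw Sw.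
    destruct (classic (R w z)) as [Rwz|Rwz].
    + assert (Sx : sat z (emb e1)) by (eapply persist; eauto).
      apply (persist _ _ _ _ Rtrans Vmono _ z); auto. apply IHe2; auto.
      intros y [Py [Rzy Nyz]]. apply (Hy y); [split; auto| auto |apply Rrefl|].
      eapply persist; eauto.
    + apply (Hy w); auto; split; auto.
Qed.

End Gen.

Lemma count_le {A} (l : list A) (f g : A -> bool) : (forall a, In a l -> f a = true -> g a = true) ->
  length (filter f l) <= length (filter g l).
Proof.
  induction l as [|x l IH]; simpl; intros H; auto.
  specialize (IH (fun a Ha => H a (or_intror Ha))).
  destruct (f x) eqn:E1; destruct (g x) eqn:E2; simpl; try lia.
  rewrite (H x (or_introl eq_refl) E1) in E2; discriminate.
Qed.

Lemma count_lt {A} (l : list A) (f g : A -> bool) : (forall a, In a l -> f a = true -> g a = true) ->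
  (exists a, In a l /\ f a = false /\ g a = true) -> length (filter f l) < length (filter g l).
Proof.
  induction l as [|x l IH]; simpl; intros H [a [Ha [Hf Hg]]]; [destruct Ha|].
  pose proof (count_le l f g (fun a Ha => H a (or_intror Ha))).
  destruct Ha as [<-|Ha].
  - rewrite Hf, Hg; simpl; lia.
  - specialize (IH (fun a Ha => H a (or_intror Ha)) (ex_intro _ a (conj Ha (conj Hf Hg)))).
    destruct (f x) eqn:E1; destruct (g x) eqn:E2; simpl; try lia.
    rewrite (H x (or_introl eq_refl) E1) in E2; discriminate.
Qed.

Definition bdec (Q : Prop) : bool := if excluded_middle_informative Q then true else false.
Lemma bdec_iff Q : bdec Q = true <-> Q.
Proof. unfold bdec; destruct excluded_middle_informative; split; auto; discriminate. Qed.
Lemma bdec_false Q : bdec Q = false <-> ~ Q.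
Proof. unfold bdec; destruct excluded_middle_informative; split; auto; try discriminate; tauto. Qed.

Definition imf_eq_dec : forall a b : imf, {a = b} + {a <> b}.
Proof. decide equality; apply Nat.eq_dec. Defined.

Section M.
Variable n : nat.
Variable S : list imf.
Hypothesis SL : forall s, In s S -> imf_lang n s.
Hypothesis Sand : forall a b, In (IAnd a b) S -> In a S /\ In b S.
Hypothesis Simp : forall a b, In (IImp a b) S -> In a S /\ In b S.

Definition PM (X : list imf) : Prop :=
  incl X S /\ forall s, In s S -> nd (map emb X) (emb s) -> In s X.
Definition VM (X : list imf) (i : nat) : Prop := In (IVar i) X.
Notation satM := (sat (list imf) PM (@incl imf) VM).

Lemma RMrefl (X : list imf) : incl X X. Proof. apply incl_refl. Qed.
Lemma RMtrans (X Y Z : list imf) : incl X Y -> incl Y Z -> incl X Z. Proof. apply incl_tran. Qed.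
Lemma VMmono (X Y : list imf) i : incl X Y -> VM X i -> VM Y i. Proof. unfold VM; auto. Qed.

Lemma nd_in X s : In s X -> nd (map emb X) (emb s).
Proof. intro; apply nd_ax, in_map; auto. Qed.

Definition clos (G : list form) : list imf := filter (fun t => bdec (nd G (emb t))) S.

Lemma clos_In G t : In t (clos G) <-> In t S /\ nd G (emb t).
Proof. unfold clos; rewrite filter_In, bdec_iff; tauto. Qed.

Lemma clos_PM G : PM (clos G).
Proof.
  split.
  - intros t Ht; apply clos_In in Ht; tauto.
  - intros s Hs Hn. apply clos_In; split; auto. eapply nd_subst; eauto.
    intros h Hh. apply in_map_iff in Hh as [t [<- Ht]]. apply clos_In in Ht; tauto.
Qed.

Lemma truth_M s : In s S -> forall X, PM X -> (satM X (emb s) <-> In s X).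
Proof.
  induction s; simpl; intros Hs X HX.
  - unfold VM; tauto.
  - destruct (Sand _ _ Hs) as [H1 H2]. rewrite (IHs1 H1 X HX), (IHs2 H2 X HX). split.
    + intros [? ?]. apply HX; auto. simpl. apply nd_andI; apply nd_in; auto.
    + intros H; split; apply HX; auto; [eapply nd_andE1| eapply nd_andE2]; apply (nd_in X _ H).
  - destruct (Simp _ _ Hs) as [H1 H2]. split.
    + intros H. apply NNPP; intro Hn.
      set (Y := clos (emb s1 :: map emb X)).
      assert (PY : PM Y) by apply clos_PM.
      assert (XY : incl X Y).
      { intros x Hx. apply clos_In; split. apply HX; auto. apply nd_ax; right; apply in_map; auto. }
      assert (s1Y : In s1 Y) by (apply clos_In; split; auto; apply nd_ax; left; auto).
      assert (s2Y : In s2 Y).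
      { apply (IHs2 H2 Y PY). apply H; auto. apply (IHs1 H1 Y PY); auto. }
      apply clos_In in s2Y as [_ Hd]. apply Hn. apply HX; auto. simpl. apply nd_impI; auto.
    + intros H Y HY XY H1'. apply (IHs2 H2 Y HY). apply (IHs1 H1 Y HY) in H1'.
      apply HY; auto. apply (nd_impE _ (emb s1)); [apply (nd_in Y (IImp s1 s2))| apply nd_in]; auto.
Qed.

Definition meas (X : list imf) : nat :=
  length (filter (fun s => if in_dec imf_eq_dec s X then true else false) S).

Lemma meas_le X : meas X <= length S.
Proof. unfold meas. apply filter_length_le. Qed.

Lemma meas_lt X Y : PM X -> PM Y -> incl X Y -> ~ incl Y X -> meas X < meas Y.
Proof.
  intros HX HY XY NYX. unfold meas. apply count_lt.
  - intros a _. destruct in_dec; [|discriminate]. destruct in_dec; auto.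
  - assert (exists a, In a Y /\ ~ In a X) as [a [Ha Na]].
    { apply NNPP; intro H. apply NYX; intros a Ha. apply NNPP; intro; apply H; eauto. }
    exists a; split; [apply HY; auto|]. destruct in_dec; [tauto|]. destruct in_dec; tauto.
Qed.

Lemma meas_ind (Q : list imf -> Prop) :
  (forall X, PM X -> (forall Y, PM Y -> incl X Y -> ~ incl Y X -> Q Y) -> Q X) ->
  forall X, PM X -> Q X.
Proof.
  intros H. assert (forall k X, PM X -> length S - meas X <= k -> Q X).
  { induction k; intros X HX Hk; apply H; auto; intros Y HY XY NYX;
      pose proof (meas_lt X Y HX HY XY NYX); pose proof (meas_le Y).
    - lia.
    - apply IHk; auto; lia. }
  intros X HX; apply (H0 (length S - meas X) X HX); auto.
Qed.

Lemma max_exists (Q : list imf -> Prop) X : PM X -> Q X ->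
  exists Y, PM Y /\ Q Y /\ incl X Y /\ forall Z, PM Z -> Q Z -> incl Y Z -> incl Z Y.
Proof.
  revert X. apply (meas_ind (fun X => Q X -> exists Y, PM Y /\ Q Y /\ incl X Y /\ forall Z, PM Z -> Q Z -> incl Y Z -> incl Z Y)).
  intros X HX IH QX.
  destruct (classic (exists Z, PM Z /\ Q Z /\ incl X Z /\ ~ incl Z X)) as [[Z [HZ [QZ [XZ NZX]]]]|Hn].
  - destruct (IH Z HZ XZ NZX QZ) as [Y [HY [QY [ZY HYm]]]]. exists Y; split; [|split; [|split]]; auto.
    eapply incl_tran; eauto.
  - exists X; split; [|split; [|split]]; auto. apply incl_refl. intros Z HZ QZ XZ. apply NNPP; intro; apply Hn; eauto.
Qed.

Definition sepM := gsep (list imf) PM (@incl imf) VM n.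

Lemma cm_point a b : In a S -> In b S -> ~ nd [] (Imp (emb a) (emb b)) ->
  exists X, PM X /\ sepM X /\ satM X (emb a) /\ ~ satM X (emb b).
Proof.
  intros Ha Hb Nab.
  set (X0 := clos [emb a]).
  assert (P0 : PM X0) by apply clos_PM.
  assert (Q0 : In a X0 /\ ~ In b X0).
  { split. apply clos_In; split; auto; apply nd_ax; left; auto.
    intro H; apply clos_In in H as [_ H]; apply Nab; apply nd_impI; auto. }
  destruct (max_exists (fun X => In a X /\ ~ In b X) X0 P0 Q0) as [X [HX [[HaX HbX] [_ Hm]]]].
  exists X; split; [|split; [|split]]; auto.
  - apply (sep_witness _ _ _ _ RMrefl RMtrans VMmono n b X (SL _ Hb) HX).
    + rewrite (truth_M _ Hb X HX); auto.
    + intros Y [PY [XY NYX]]. rewrite (truth_M _ Hb Y PY). apply NNPP; intro Nb.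
      apply NYX, Hm; auto.
  - apply truth_M; auto.
  - rewrite truth_M; auto.
Qed.

Lemma det_sep e : imf_lang n e -> forall z, PM z ->
  (forall z', PM z' -> sepM z' -> incl z z' -> satM z' (emb e)) -> satM z (emb e).
Proof.
  intros Le. apply (meas_ind (fun z => (forall z', PM z' -> sepM z' -> incl z z' -> satM z' (emb e)) -> satM z (emb e))).
  intros z Hz IH H. destruct (classic (sepM z)) as [Hs|Hs].
  - apply H; auto. apply incl_refl.
  - apply (nonsep_det _ _ _ _ RMrefl RMtrans VMmono n e z Le Hz Hs).
    intros y [Py [zy Nyz]]. apply IH; auto. intros z' Pz' Sz' yz'. apply H; auto. eapply incl_tran; eauto.
Qed.

Lemma sep_imp x c d : imf_lang n c -> imf_lang n d -> PM x ->
  (satM x (Imp (emb c) (emb d)) <->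
   (satM x (emb c) -> satM x (emb d)) /\
   forall y, PM y -> sepM y -> incl x y -> ~ incl y x -> satM y (Imp (emb c) (emb d))).
Proof.
  intros Lc Ld Px. split.
  - intros H; split.
    + apply H; auto. apply incl_refl.
    + intros y Py _ xy _. eapply persist; eauto. apply RMtrans. apply VMmono.
  - intros [H1 H2] w Pw xw Sw. apply (det_sep d Ld w Pw). intros z' Pz' Sz' wz'.
    destruct (classic (incl z' x)) as [zx|zx].
    + assert (Sx : satM x (emb c)).
      { eapply (persist _ _ _ _ RMtrans VMmono _ w); auto. eapply incl_tran; eauto. }
      eapply (persist _ _ _ _ RMtrans VMmono _ x); auto. eapply incl_tran; eauto.
    + apply (H2 z' Pz' Sz'); auto. eapply incl_tran; eauto. apply incl_refl.
      eapply persist; eauto. apply RMtrans. apply VMmono.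
Qed.

End M.

Fixpoint subs (a : imf) : list imf :=
  a :: match a with IVar _ => [] | IAnd b c | IImp b c => subs b ++ subs c end.

Lemma subs_lang n a : imf_lang n a -> forall s, In s (subs a) -> imf_lang n s.
Proof.
  induction a; simpl; intros La s [<-|Hs]; auto; try destruct Hs;
  destruct La; apply in_app_or in Hs; destruct Hs; eauto.
Qed.

Lemma subs_self a : In a (subs a).
Proof. destruct a; simpl; auto. Qed.

Lemma subs_and a : forall b c, In (IAnd b c) (subs a) -> In b (subs a) /\ In c (subs a).
Proof.
  induction a; simpl; intros b c [H|H];
  try (inversion H; subst; split; right; apply in_or_app; [left|right]; apply subs_self; fail);
  try discriminate; try contradiction;
  (apply in_app_or in H as [H|H]; [destruct (IHa1 _ _ H)|destruct (IHa2 _ _ H)]); split; right; apply in_or_app; auto.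
Qed.

Lemma subs_imp a : forall b c, In (IImp b c) (subs a) -> In b (subs a) /\ In c (subs a).
Proof.
  induction a; simpl; intros b c [H|H];
  try (inversion H; subst; split; right; apply in_or_app; [left|right]; apply subs_self; fail);
  try discriminate; try contradiction;
  (apply in_app_or in H as [H|H]; [destruct (IHa1 _ _ H)|destruct (IHa2 _ _ H)]); split; right; apply in_or_app; auto.
Qed.

Definition S2 (a b : imf) := subs a ++ subs b.

Lemma S2_lang n a b : imf_lang n a -> imf_lang n b -> forall s, In s (S2 a b) -> imf_lang n s.
Proof. intros La Lb s Hs; apply in_app_or in Hs as [H|H]; [apply (subs_lang n a)|apply (subs_lang n b)]; auto. Qed.
Lemma S2_and a b : forall c d, In (IAnd c d) (S2 a b) -> In c (S2 a b) /\ In d (S2 a b).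
Proof. intros c d Hs; apply in_app_or in Hs as [H|H]; [apply subs_and in H|apply subs_and in H];
  destruct H; split; apply in_or_app; auto. Qed.
Lemma S2_imp a b : forall c d, In (IImp c d) (S2 a b) -> In c (S2 a b) /\ In d (S2 a b).
Proof. intros c d Hs; apply in_app_or in Hs as [H|H]; [apply subs_imp in H|apply subs_imp in H];
  destruct H; split; apply in_or_app; auto. Qed.

Fixpoint sublists {A} (l : list A) : list (list A) :=
  match l with [] => [[]] | a :: l => map (cons a) (sublists l) ++ sublists l end.

Lemma filter_sub {A} (l : list A) f : In (filter f l) (sublists l).
Proof.
  induction l; simpl; auto. destruct (f a); apply in_or_app; [left; apply in_map|right]; auto.
Qed.

Section GM.
Variable n : nat.
Variable S : list imf.
Hypothesis SL : forall s, In s S -> imf_lang n s.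
Hypothesis Sand : forall a b, In (IAnd a b) S -> In a S /\ In b S.
Hypothesis Simp : forall a b, In (IImp a b) S -> In a S /\ In b S.

Notation PM := (PM S).
Notation satM := (sat (list imf) PM (@incl imf) VM).
Notation sepM := (sepM n S).
Definition ThM := Th (list imf) PM (@incl imf) VM n.
Notation satU := (sat fset (separated n) subset VU).

Lemma M_covers x : PM x -> covers (list imf) PM (@incl imf) x (sublists S).
Proof.
  intros Hx y Hy xy. set (z := filter (fun s => if in_dec imf_eq_dec s y then true else false) S).
  assert (zy : incl z y).
  { intros s Hs. apply filter_In in Hs as [_ Hs]. destruct in_dec; [auto|discriminate]. }
  assert (yz : incl y z).
  { intros s Hs. apply filter_In; split. apply Hy; auto. destruct in_dec; tauto. }
  exists z; split; [apply filter_sub|split; [|split; [|split]]]; auto.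
  - split. intros s Hs; apply filter_In in Hs; tauto.
    intros s Hs Hn. apply yz, Hy; auto. eapply nd_weak; eauto. intros f Hf.
    apply in_map_iff in Hf as [t [<- Ht]]. apply in_map; auto.
  - eapply incl_tran; eauto.
Qed.

Lemma ThM_upt x : PM x -> Upt n (ThM x).
Proof.
  intros Hx. split.
  - apply Th_pf; auto. apply RMrefl. apply RMtrans. apply VMmono.
  - eapply Th_finite; eauto. apply RMtrans. apply VMmono. apply M_covers; auto.
Qed.

Lemma ThM_back x v : PM x -> prime_filter n v -> subset (ThM x) v ->
  exists y, PM y /\ incl x y /\ subset (ThM y) v /\ subset v (ThM y).
Proof.
  intros Hx Hv H. destruct (Th_back _ _ _ _ (RMtrans) (VMmono) n x _ Hx (M_covers x Hx) v Hv H)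
    as [y [_ [Py [xy [H1 H2]]]]]. exists y; auto.
Qed.

Lemma ThM_mono x y : incl x y -> subset (ThM x) (ThM y).
Proof. apply Th_mono. apply RMtrans. apply VMmono. Qed.

Lemma ThM_sep x : PM x -> sepM x -> separated n (ThM x).
Proof.
  intros Hx [q [Hq [Nq Hs]]]. split; [apply ThM_upt; auto|]. exists q; split; [|split]; auto.
  - intros [_ H]; apply Nq; apply H.
  - intros y Hy Hxy Nyx. destruct (ThM_back x y Hx (proj1 Hy) Hxy) as [x' [Px' [xx' [H1 H2]]]].
    apply H1. split; [simpl; auto|]. simpl. apply Hs. split; [|split]; auto.
    intro x'x. apply Nyx. eapply subset_trans; eauto. apply ThM_mono; auto.
Qed.

Lemma ThM_back_sep x y : PM x -> separated n y -> subset (ThM x) y ->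
  exists x', PM x' /\ sepM x' /\ incl x x' /\ subset (ThM x') y /\ subset y (ThM x').
Proof.
  intros Hx Hy Hxy. destruct (ThM_back x y Hx (proj1 (proj1 Hy)) Hxy) as [x'' [P'' [xx'' [H1 H2]]]].
  destruct (max_exists S (fun z => subset (ThM z) y /\ subset y (ThM z)) x'' P'' (conj H1 H2))
    as [x' [P' [[H3 H4] [x''x' Hm]]]].
  exists x'; split; [|split; [|split]]; auto; [| eapply incl_tran; eauto].
  destruct Hy as [Uy [q [Hq [Nq Hs]]]]. exists q; split; [|split]; auto.
  - intro V'; apply Nq, H3. split; simpl; auto.
  - intros z [Pz [x'z Nzx']]. assert (Hz : ThM z (Var q)).
    { apply Hs. apply ThM_upt; auto. eapply subset_trans; eauto. apply ThM_mono; auto.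
      intro zy. apply Nzx'. apply Hm; auto. split; auto. eapply subset_trans; eauto. apply ThM_mono; auto. }
    apply Hz.
Qed.

Lemma sep_imp2 x c d : imf_lang n d -> PM x ->
  (forall y, PM y -> sepM y -> incl x y -> satM y (emb c) -> satM y (emb d)) -> satM x (Imp (emb c) (emb d)).
Proof.
  intros Ld Hx H w Pw xw Sw. apply (det_sep n S d Ld w Pw). intros z Pz Sz wz.
  apply H; auto. eapply incl_tran; eauto. eapply persist; eauto. apply RMtrans. apply VMmono.
Qed.

Lemma agree c : imf_lang n c -> forall x, PM x -> sepM x -> (satU (ThM x) (emb c) <-> satM x (emb c)).
Proof.
  induction c; simpl; intros Lc x Hx Sx.
  - unfold VU, ThM, Th; simpl. tauto.
  - destruct Lc as [L1 L2]. rewrite IHc1, IHc2; tauto.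
  - destruct Lc as [L1 L2]. split.
    + intros H. apply sep_imp2; auto. intros y Py Sy xy Hc.
      apply (IHc2 L2 y Py Sy). apply H. apply ThM_sep; auto. apply ThM_mono; auto.
      apply (IHc1 L1 y Py Sy); auto.
    + intros H y Hy xy Hc.
      destruct (ThM_back_sep x y Hx Hy xy) as [x' [P' [S' [xx' [H1 H2]]]]].
      assert (Hc' : satU (ThM x') (emb c1)).
      { eapply persist; eauto. apply subset_trans. apply VU_mono. }
      apply (IHc1 L1 x' P' S') in Hc'. apply H in Hc'; auto.
      apply (IHc2 L2 x' P' S') in Hc'. eapply persist; eauto. apply subset_trans. apply VU_mono.
Qed.

End GM.

Lemma counter n a b : imf_lang n a -> imf_lang n b -> ~ nd [] (Imp (emb a) (emb b)) ->
  exists w, Uim n w /\ hsem n a w /\ ~ hsem n b w.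
Proof.
  intros La Lb Nab. set (S := S2 a b).
  assert (SL := S2_lang n a b La Lb). assert (Sa := S2_and a b). assert (Si := S2_imp a b).
  assert (Ha : In a S) by (apply in_or_app; left; apply subs_self).
  assert (Hb : In b S) by (apply in_or_app; right; apply subs_self).
  destruct (cm_point n S SL Sa Si a b Ha Hb Nab) as [X [PX [SX [XA XB]]]].
  assert (Hz := ThM_sep n S X PX SX).
  set (z := ThM n S X) in *.
  exists (fU n z).
  assert (Uw : Uim n (fU n z)).
  { split. apply (proj1 (fU_pmorph n)); auto. exists (fU n); split. apply fU_pmorph.
    exists z; split; auto; split; apply subset_refl. }
  split; [auto|split].
  - apply (truth_Uim n a La _ Uw). split. apply lang_emb; auto.
    apply (agree n S a La X PX SX); auto.
  - rewrite (truth_Uim n b Lb _ Uw). intros [_ H]. apply XB.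
    apply (agree n S b Lb X PX SX); auto.
Qed.

Inductive tree : Type := node : list bool -> list tree -> tree.

Fixpoint timp (A B : tree -> Prop) (t : tree) : Prop :=
  match t with
  | node col ch => (A t -> B t) /\
      (fix go (l : list tree) : Prop := match l with [] => True | s :: l => timp A B s /\ go l end) ch
  end.

Lemma timp_eq A B col ch : timp A B (node col ch) <->
  (A (node col ch) -> B (node col ch)) /\ forall s, In s ch -> timp A B s.
Proof.
  simpl. split; intros [H1 H2]; split; auto.
  - clear H1. induction ch; simpl in *; [tauto|]. destruct H2 as [H2 H3]. intros s [<-|Hs]; auto.
  - clear H1. induction ch; simpl in *; auto.
    split; [apply H2; left; auto| apply IHch; intros; apply H2; right; auto].
Qed.

Definition tcol (t : tree) : list bool := match t with node col _ => col end.

Fixpoint tsat (c : imf) (t : tree) : Prop :=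
  match c with
  | IVar i => nth i (tcol t) false = true
  | IAnd a b => tsat a t /\ tsat b t
  | IImp a b => timp (tsat a) (tsat b) t
  end.

Fixpoint cols (n : nat) : list (list bool) :=
  match n with 0 => [[]] | S n => map (cons true) (cols n) ++ map (cons false) (cols n) end.

Lemma cols_In l : In l (cols (length l)).
Proof.
  induction l as [|b l IH]; simpl; auto. apply in_or_app. destruct b; [left|right]; apply in_map; auto.
Qed.

Section T.
Variable n : nat.

Fixpoint E (k : nat) : list tree :=
  match k with
  | 0 => []
  | S k => flat_map (fun col => map (node col) (sublists (E k))) (cols n)
  end.

Lemma E_In k col ch : length col = n -> In ch (sublists (E k)) -> In (node col ch) (E (S k)).
Proof. intros Hl Hc. simpl. apply in_flat_map. exists col; split; [rewrite <- Hl; apply cols_In| apply in_map; auto]. Qed.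

Lemma nth_map_seq (f : nat -> bool) i : i < n -> nth i (map f (seq 0 n)) false = f i.
Proof.
  intro Hi. rewrite nth_indep with (d' := f 0) by (rewrite length_map, length_seq; auto).
  rewrite map_nth, seq_nth; auto.
Qed.

Variable S : list imf.
Notation PM := (PM S).
Notation satM := (sat (list imf) PM (@incl imf) VM).
Notation sepM := (sepM n S).

Definition fcount (x : list imf) : nat := length (filter (fun i => negb (bdec (VM x i))) (seq 0 n)).

Lemma fcount_le x : fcount x <= n.
Proof. unfold fcount. rewrite <- (length_seq n 0) at 2. apply filter_length_le. Qed.

Lemma fcount_lt x y : sepM x -> incl x y -> ~ incl y x -> PM y -> fcount y < fcount x.
Proof.
  intros [q [Hq [Nq Hs]]] xy Nyx Py. unfold fcount. apply count_lt.
  - intros i _ H. apply Bool.negb_true_iff in H. apply Bool.negb_true_iff.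
    rewrite bdec_false in *. intro; apply H; eapply VMmono; eauto.
  - exists q; split; [apply in_seq; lia|]. split.
    + apply Bool.negb_false_iff, bdec_iff, Hs. split; auto.
    + apply Bool.negb_true_iff, bdec_false; auto.
Qed.

Definition tmatch (x : list imf) (t : tree) : Prop :=
  forall c, imf_lang n c -> (satM x (emb c) <-> tsat c t).

Lemma tree_match k : forall x, PM x -> sepM x -> fcount x < k -> exists t, In t (E k) /\ tmatch x t.
Proof.
  induction k; intros x Px Sx Hk; [lia|].
  set (col := map (fun i => bdec (VM x i)) (seq 0 n)).
  set (ch := filter (fun t => bdec (exists y, PM y /\ sepM y /\ incl x y /\ ~ incl y x /\ tmatch y t)) (E k)).
  exists (node col ch). split.
  - apply E_In. unfold col; rewrite length_map, length_seq; auto. apply filter_sub.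
  - intros c; induction c; intros Lc.
    + simpl. unfold col. rewrite nth_map_seq; auto. rewrite bdec_iff. unfold VM. tauto.
    + destruct Lc as [L1 L2]. simpl. rewrite IHc1, IHc2; tauto.
    + destruct Lc as [L1 L2].
      change (satM x (Imp (emb c1) (emb c2)) <-> timp (tsat c1) (tsat c2) (node col ch)).
      rewrite (sep_imp n S x c1 c2 L1 L2 Px), timp_eq, IHc1, IHc2 by auto.
      split; intros [H1 H2]; split; auto.
      * intros s Hs. unfold ch in Hs. apply filter_In in Hs as [_ Hs]. cbv beta in Hs. rewrite bdec_iff in Hs.
        destruct Hs as [y [Py [Sy [xy [Nyx Hm]]]]]. apply (proj1 (Hm (IImp c1 c2) (conj L1 L2))). apply H2; auto.
      * intros y Py Sy xy Nyx.
        destruct (IHk y Py Sy) as [s [Hs Hm]].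
        { pose proof (fcount_lt x y Sx xy Nyx Py). lia. }
        apply (proj2 (Hm (IImp c1 c2) (conj L1 L2))). apply H2. unfold ch. apply filter_In; split; auto.
        apply bdec_iff. exists y; auto.
Qed.

End T.

Definition prof (n : nat) (a : imf) : list bool := map (fun t => bdec (tsat a t)) (E n (S n)).

Lemma map_eq_in {A B} (f g : A -> B) l : map f l = map g l -> forall x, In x l -> f x = g x.
Proof. induction l; simpl; intros H x Hx; [destruct Hx|]. inversion H. destruct Hx as [<-|Hx]; auto. Qed.

Lemma prof_eq n a b : imf_lang n a -> imf_lang n b -> prof n a = prof n b -> nd [] (Imp (emb a) (emb b)).
Proof.
  intros La Lb Hp. apply NNPP; intro Nab.
  set (SS := S2 a b).
  assert (SL := S2_lang n a b La Lb). assert (Sa := S2_and a b). assert (Si := S2_imp a b).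
  assert (Ha : In a SS) by (apply in_or_app; left; apply subs_self).
  assert (Hb : In b SS) by (apply in_or_app; right; apply subs_self).
  destruct (cm_point n SS SL Sa Si a b Ha Hb Nab) as [X [PX [SX [XA XB]]]].
  destruct (tree_match n SS (S n) X PX SX) as [t [Ht Hm]].
  { pose proof (fcount_le n X). lia. }
  pose proof (map_eq_in _ _ _ Hp t Ht) as He.
  cbv beta in He. apply (Hm a La) in XA. apply bdec_iff in XA. rewrite XA in He. symmetry in He. rewrite bdec_iff in He.
  apply XB. apply (proj2 (Hm b Lb)); auto.
Qed.

Lemma part3 n : exists l : list imf, (forall a, In a l -> imf_lang n a) /\
     forall a, imf_lang n a -> exists b, In b l /\ ipc_equiv (emb a) (emb b).
Proof.
  set (rep := fun p : list bool => match excluded_middle_informative (exists a, imf_lang n a /\ prof n a = p) with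
                 | left H => [proj1_sig (constructive_indefinite_description _ H)]
                 | right _ => [] end).
  exists (flat_map rep (cols (length (E n (S n))))). split.
  - intros a Ha. apply in_flat_map in Ha as [p [_ Hp]]. unfold rep in Hp.
    destruct excluded_middle_informative as [H|H]; [|destruct Hp].
    destruct constructive_indefinite_description as [b [Lb Pb]]. destruct Hp as [<-|[]]; auto.
  - intros a La. assert (Hr : exists a', imf_lang n a' /\ prof n a' = prof n a) by eauto.
    set (p := prof n a) in *.
    assert (Hin : In p (cols (length (E n (S n))))).
    { replace (length (E n (S n))) with (length p). apply cols_In. unfold p, prof. apply length_map. }
    destruct (excluded_middle_informative (exists a', imf_lang n a' /\ prof n a' = p)) as [H|H]; [|tauto].
    exists (proj1_sig (constructive_indefinite_description _ H)). split.
    + apply in_flat_map. exists p; split; auto. unfold rep.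
      destruct excluded_middle_informative as [H'|H']; [|tauto].
      replace H' with H by apply proof_irrelevance. left; auto.
    + destruct constructive_indefinite_description as [b [Lb Pb]]; simpl.
      split; apply (prof_eq n); auto; rewrite Pb; auto.
Qed.

Section Alg.
Variable A : ImpSL.
Notation m := (meet A).
Notation im := (imp A).
Definition le (x y : car A) : Prop := m x y = x.

Lemma le_refl x : le x x. Proof. apply (meetI A). Qed.
Lemma le_trans x y z : le x y -> le y z -> le x z.
Proof. unfold le; intros H1 H2. rewrite <- H1, <- (meetA A), H2; auto. Qed.
Lemma le_m1 x y : le (m x y) x.
Proof. unfold le. rewrite (meetC A x y), <- (meetA A), (meetI A); auto. Qed.
Lemma le_m2 x y : le (m x y) y.
Proof. unfold le. rewrite <- (meetA A), (meetI A); auto. Qed.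
Lemma le_meet x y z : le x y -> le x z -> le x (m y z).
Proof. unfold le; intros H1 H2. rewrite (meetA A), H1, H2; auto. Qed.
Lemma le_antisym x y : le x y -> le y x -> x = y.
Proof. unfold le; intros H1 H2. rewrite <- H1. rewrite <- H2 at 2. apply (meetC A). Qed.
Lemma le_mp x y : le (m (im x y) x) y.
Proof. unfold le. apply (resid A). apply (meetI A). Qed.
Lemma le_resid f c d : le (m f c) d -> le f (im c d).
Proof. unfold le; intro H. apply (resid A); auto. Qed.

Lemma le_mono a a' b b' : le a a' -> le b b' -> le (m a b) (m a' b').
Proof. intros H1 H2. apply le_meet; [eapply le_trans; [apply le_m1|auto]|eapply le_trans; [apply le_m2|auto]]. Qed.

Definition filt (F : car A -> Prop) : Prop :=
  (exists x, F x) /\ (forall x y, F x -> le x y -> F y) /\ (forall x y, F x -> F y -> F (m x y)).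

Definition RF (F G : car A -> Prop) : Prop := forall x, F x -> G x.
Variable g : nat -> car A.
Definition VF (F : car A -> Prop) (i : nat) : Prop := F (g i).
Notation satF := (sat (car A -> Prop) filt RF VF).

Lemma RFrefl F : RF F F. Proof. intros x; auto. Qed.
Lemma RFtrans F G K : RF F G -> RF G K -> RF F K. Proof. intros H1 H2 x; auto. Qed.
Lemma VFmono F G i : RF F G -> VF F i -> VF G i. Proof. unfold VF; auto. Qed.

Lemma truth_F c : forall F, filt F -> (satF F (emb c) <-> F (eval A g c)).
Proof.
  induction c; simpl; intros F HF.
  - tauto.
  - rewrite IHc1, IHc2 by auto. destruct HF as [_ [Hu Hm]]. split.
    + intros [? ?]; auto.
    + intros H; split; eapply Hu; eauto; [apply le_m1|apply le_m2].
  - split.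
    + intros H. set (G := fun y => exists f, F f /\ le (m f (eval A g c1)) y).
      destruct HF as [[x0 Hx0] [Hu Hm]].
      assert (HG : filt G).
      { split; [|split].
        - exists (eval A g c1), x0; split; auto. apply le_m2.
        - intros x y [f [Hf Hl]] Hxy. exists f; split; auto. eapply le_trans; eauto.
        - intros x y [f1 [H1 L1]] [f2 [H2 L2]]. exists (m f1 f2); split; auto.
          apply le_meet; [eapply le_trans; [|apply L1]| eapply le_trans; [|apply L2]];
            apply le_mono; try apply le_refl; [apply le_m1|apply le_m2]. }
      assert (FG : RF F G).
      { intros x Hx. exists x; split; auto. apply le_m1. }
      assert (Hc : G (eval A g c1)) by (exists x0; split; auto; apply le_m2).
      apply (IHc1 G HG) in Hc. apply H in Hc; auto. apply (IHc2 G HG) in Hc.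
      destruct Hc as [f [Hf Hl]]. eapply Hu; eauto. apply le_resid; auto.
    + intros H G HG FG Hc. apply (IHc1 G HG) in Hc. apply (IHc2 G HG).
      destruct HG as [_ [Hu Hm]]. eapply Hu; [apply Hm; [apply FG; eauto| eauto]| apply le_mp].
Qed.

Lemma alg_sound a b : nd [] (Imp (emb a) (emb b)) -> le (eval A g a) (eval A g b).
Proof.
  intro H. set (F := fun y => le (eval A g a) y).
  assert (HF : filt F).
  { split; [|split]. exists (eval A g a); apply le_refl.
    intros x y H1 H2; eapply le_trans; eauto. intros x y H1 H2; apply le_meet; auto. }
  apply (truth_F b F HF). eapply (sound0 _ _ _ _ RFrefl RFtrans VFmono); eauto.
  apply (truth_F a F HF). apply le_refl.
Qed.

Lemma alg_eq a b : ipc_equiv (emb a) (emb b) -> eval A g a = eval A g b.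
Proof. intros [H1 H2]. apply le_antisym; apply alg_sound; auto. Qed.

End Alg.

Theorem theorem3p13 (n : nat) :
  (forall a x y, h n a x -> Uim n y -> subset x y -> h n a y) /\
  (forall a b, imf_lang n a -> imf_lang n b ->
     ((forall x, h n a x <-> h n b x) <-> ipc_equiv (emb a) (emb b))) /\
  (exists l : list imf, (forall a, In a l -> imf_lang n a) /\
     forall a, imf_lang n a -> exists b, In b l /\ ipc_equiv (emb a) (emb b)) /\
  (forall (A : ImpSL) (g : nat -> car A),
     exists l : list (car A), forall a, imf_lang n a -> In (eval A g a) l).
Proof.
  split; [|split; [|split]].
  - intros a x y [_ Hx] Hy Hxy. split; auto. eapply hsem_persist; eauto.
  - intros a b La Lb. split.
    + intros H. split; apply NNPP; intro Hn.
      * destruct (counter n a b La Lb Hn) as [w [Uw [Ha Hb]]]. apply Hb, (proj1 (H w)). split; auto.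
      * destruct (counter n b a Lb La Hn) as [w [Uw [Ha Hb]]]. apply Hb, (proj2 (H w)). split; auto.
    + intros [H1 H2] x. unfold h. split; intros [Ux Hx]; split; auto.
      * apply (truth_Uim n b Lb x Ux). apply (truth_Uim n a La x Ux) in Hx.
        eapply (pf_closed n x (proj1 (proj1 Ux))); eauto. apply lang_emb; auto.
      * apply (truth_Uim n a La x Ux). apply (truth_Uim n b Lb x Ux) in Hx.
        eapply (pf_closed n x (proj1 (proj1 Ux))); eauto. apply lang_emb; auto.
  - apply part3.
  - intros A g. destruct (part3 n) as [l [Hl1 Hl2]]. exists (map (eval A g) l).
    intros a La. destruct (Hl2 a La) as [b [Hb He]]. rewrite (alg_eq A g a b He). apply in_map; auto.
Qed.
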